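(* Let $\mathcal X\subseteq\{0,1\}^n$, $\pmb x\in\mathcal X$, $\hat{\pmb c},\pmb d\in\mathbb R^n_{\ge0}$ and integers $\Gamma,\Gamma'\ge0$ be fixed. Then the adversarial problem \[\max_{\pmb\delta\in\Delta(\Gamma),\,\pmb y\in\mathcal X}\ \min_{\pmb\epsilon\in\Delta(\Gamma')}\ \sum_{i\in[n]}(\hat c_i+d_i\delta_i+d_i\epsilon_i)(x_i-y_i)\] has an optimal solution $(\pmb\delta,\pmb y)$ with $y_i+\delta_i\le1$ for all $i\in[n]$.
   Context: $[n]=\{1,\dots,n\}$; for an integer $k\ge0$, $\Delta(k)=\{\pmb\delta\in\{0,1\}^n:\sum_i\delta_i\le k\}$. $\mathcal X$ is a nonempty set of feasible solutions of a combinatorial optimization problem. *)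

(* Defs.v *)
From mathcomp Require Import all_boot all_order all_algebra.
Set Implicit Arguments. Unset Strict Implicit. Unset Printing Implicit Defensive.
Import Order.TTheory GRing.Theory Num.Theory.
Local Open Scope ring_scope.

(* 0/1 vectors of length n are represented as {ffun 'I_n -> bool};
   the real value of a coordinate b is (b : nat)%:R. *)
Notation bvec n := {ffun 'I_n -> bool}.

Definition Delta (n k : nat) : {set bvec n} :=
  [set d : bvec n | (\sum_(i < n) (d i : nat) <= k)%N].

Definition adv_obj (R : realFieldType) (n : nat) (c d : 'I_n -> R)
    (x y delta eps : bvec n) : R :=
  \sum_(i < n) (c i + d i * (delta i : nat)%:R + d i * (eps i : nat)%:R)
                * ((x i : nat)%:R - (y i : nat)%:R).

(* inner value  min_{eps in Delta(Gamma')} adv_obj ... ; the minimum is over a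
   finite nonempty set (the zero vector lies in Delta(Gamma')), and the
   seed value is the objective at eps = 0, which belongs to the set. *)
Definition adv_inner (R : realFieldType) (n : nat) (c d : 'I_n -> R)
    (G' : nat) (x y delta : bvec n) : R :=
  \big[Order.min/adv_obj c d x y delta [ffun=> false]]_(e in Delta n G')
     adv_obj c d x y delta e.

Definition adv_optimal (R : realFieldType) (n : nat) (X : {set bvec n})
    (c d : 'I_n -> R) (G G' : nat) (x delta y : bvec n) : Prop :=
  [/\ delta \in Delta n G, y \in X &
      forall delta' y', delta' \in Delta n G -> y' \in X ->
        adv_inner c d G' x y' delta' <= adv_inner c d G' x y delta].

(* Main.v *)
Require Import Defs.
From mathcomp Require Import all_boot all_order all_algebra.
From mathcomp Require Import lra.
Import Order.TTheory GRing.Theory Num.Theory.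
Local Open Scope ring_scope.

Lemma obj_mono (R : realFieldType) (n : nat) (c d : 'I_n -> R) x y delta eps :
  (forall i, 0 <= d i) ->
  adv_obj c d x y delta eps <=
  adv_obj c d x y [ffun i => delta i && ~~ y i] eps.
Proof.
move=> hd; rewrite /adv_obj; apply: ler_sum => i _; rewrite ffunE.
have := hd i; case: (x i); case: (y i); case: (delta i); case: (eps i) => /=;
  rewrite ?mulr0 ?mulr1 ?addr0 ?subr0 ?subrr; lra.
Qed.

Lemma inner_mono {R : realFieldType} {n : nat} (c d : 'I_n -> R) G' x y delta :
  (forall i, 0 <= d i) ->
  adv_inner c d G' x y delta <=
  adv_inner c d G' x y [ffun i => delta i && ~~ y i].
Proof.
move=> hd; rewrite /adv_inner.
apply: (big_ind2 (fun a b => a <= b)); first exact: obj_mono.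
  by move=> a b a' b' h1 h2; rewrite le_min !ge_min h1 h2 orbT.
move=> e _; exact: obj_mono.
Qed.

Theorem lemma2 (R : realFieldType) (n : nat) (X : {set bvec n})
    (x : bvec n) (c d : 'I_n -> R) (G G' : nat) :
  x \in X ->
  (forall i, 0 <= c i) -> (forall i, 0 <= d i) ->
  exists delta y : bvec n,
    adv_optimal X c d G G' x delta y /\
    (forall i : 'I_n, ((y i : nat) + (delta i : nat) <= 1)%N).
Proof.
move=> hx hc hd.
pose P := [pred p : bvec n * bvec n | (p.1 \in Delta n G) && (p.2 \in X)].
have P0 : P ([ffun=> false], x).
  by rewrite /= hx andbT inE; apply/leq_trans: (leq0n G); rewrite big1 // => i _; rewrite ffunE.
pose F := fun p : bvec n * bvec n => adv_inner c d G' x p.2 p.1.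
case: (@arg_maxP _ R _ _ P F P0) => [[del y]] /= /andP[hdel hy] hmax.
exists [ffun i => del i && ~~ y i], y; split.
  split => //.
    rewrite inE; move: hdel; rewrite inE; apply: leq_trans.
    by apply: leq_sum => i _; rewrite ffunE; case: (del i); case: (y i).
  move=> del' y' h1 h2.
  have h3 : F (del', y') <= F (del, y) by apply: hmax; rewrite /= h1 h2.
  exact: le_trans h3 (inner_mono (n:=n) c d G' x y del hd).
by move=> i; rewrite ffunE; case: (del i); case: (y i).
Qed.
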